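(* Let $G$ be a compact group with Haar probability measure $dg$, acting linearly and continuously on a finite-dimensional real vector space $V$. Fix $v\in V$ and a linear function $\ell:V\to\mathbb{R}$, let $f(g)=\ell(gv)$, and let $k$ be a positive integer. Then $$\|f\|_{2k}\le\|f\|_\infty\le \binom{\dim V+k-1}{k}^{1/(2k)}\|f\|_{2k}.$$
   Context: For $f:G\to\mathbb{R}$, $\|f\|_\infty=\max_{g\in G}|f(g)|$ and $\|f\|_{2k}=\left(\int_G f^{2k}(g)\,dg\right)^{1/(2k)}$. *)

(* Defs.v *)
From HB Require Import structures.
From mathcomp Require Import all_boot all_order all_algebra.
From mathcomp Require Import monoid.
From mathcomp Require Import all_classical all_reals all_analysis.
Set Implicit Arguments. Unset Strict Implicit. Unset Printing Implicit Defensive.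

(* A topological group: a group (monoid.v's groupType) whose carrier is also
   a topological space (continuity of the operations is imposed as hypotheses). *)
HB.structure Definition TopGroup := {G of Group G & PointedTopological G}.

(* Main.v *)
Require Import Defs.
From HB Require Import structures.
From mathcomp Require Import all_boot all_order all_algebra.
From mathcomp Require Import monoid.
From mathcomp Require Import all_classical all_reals all_analysis.
From mathcomp Require Import ring lra.
Import Order.TTheory GRing.Theory Num.Theory.
Import numFieldNormedType.Exports.
Local Open Scope classical_set_scope.
Local Open Scope ring_scope.
Lemma CS_sum (R : realFieldType) p (a b : 'I_p -> R) :
  (\sum_(j < p) a j * b j) ^+ 2 <= (\sum_(j < p) a j ^+ 2) * (\sum_(j < p) b j ^+ 2).
Proof.
have E1 : (\sum_(j < p) a j * b j) ^+ 2 =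
    \sum_(i < p) \sum_(j < p) (a i * b i) * (a j * b j).
  by rewrite expr2 big_distrl /=; apply: eq_bigr => i _; rewrite big_distrr.
have E2 : (\sum_(j < p) a j ^+ 2) * (\sum_(j < p) b j ^+ 2) =
    \sum_(i < p) \sum_(j < p) a i ^+ 2 * b j ^+ 2.
  by rewrite big_distrl /=; apply: eq_bigr => i _; rewrite big_distrr.
have E3 : (\sum_(j < p) a j ^+ 2) * (\sum_(j < p) b j ^+ 2) =
    \sum_(i < p) \sum_(j < p) a j ^+ 2 * b i ^+ 2.
  by rewrite E2 exchange_big.
have E4 : 2 * ((\sum_(j < p) a j ^+ 2) * (\sum_(j < p) b j ^+ 2)) =
   \sum_(i < p) \sum_(j < p) (a i ^+ 2 * b j ^+ 2 + a j ^+ 2 * b i ^+ 2).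
  rewrite mulr_natl mulr2n {1}E2 E3 -big_split /=.
  by apply: eq_bigr => i _; rewrite -big_split.
rewrite -(@ler_pM2l _ 2) // E1 E4.
rewrite big_distrr /=; apply: ler_sum => i _.
rewrite big_distrr /=; apply: ler_sum => j _.
rewrite -subr_ge0.
have -> : a i ^+ 2 * b j ^+ 2 + a j ^+ 2 * b i ^+ 2 - 2 * (a i * b i * (a j * b j))
   = (a i * b j - a j * b i) ^+ 2.
  by ring.
exact: sqr_ge0.
Qed.
Section GramSchmidt.
Context d (T : measurableType d) (R : realType) (mu : {measure set T -> \bar R}).
Variable P : (T -> R) -> Prop.
Hypothesis P0 : P (fun _ => 0).
Hypothesis PD : forall {f g}, P f -> P g -> P (fun x => f x + g x).
Hypothesis PZ : forall c {f}, P f -> P (fun x => c * f x).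
Hypothesis PM : forall {f g}, P f -> P g -> P (fun x => f x * g x).
Hypothesis Pint : forall {f}, P f -> mu.-integrable setT (EFin \o f).

Definition ip (f g : T -> R) := \int[mu]_x (f x * g x).

Hypothesis Pnd : forall {f}, P f -> ip f f = 0 -> forall x, f x = 0.

Lemma PB f g : P f -> P g -> P (fun x => f x - g x).
Proof.
move=> Pf Pg; have := PD Pf (PZ (-1) Pg).
by congr P; apply: funext => x; rewrite mulN1r.
Qed.

Lemma P_sum (I : Type) (r : seq I) (p : pred I) (F : I -> T -> R) :
  (forall i, P (F i)) -> P (fun x => \sum_(i <- r | p i) F i x).
Proof.
move=> PF; elim: r => [|i r IH].
  by under [fun x => _]funext do rewrite big_nil.
case: (boolP (p i)) => pi.
  have := PD (PF i) IH; congr P; apply: funext => x; by rewrite big_cons pi.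
by move: IH; congr P; apply: funext => x; rewrite big_cons (negbTE pi).
Qed.

Lemma ip_sym f g : ip f g = ip g f.
Proof. by rewrite /ip; under eq_Rintegral do rewrite mulrC. Qed.

Lemma ipDl f g h : P f -> P g -> P h ->
  ip (fun x => f x + g x) h = ip f h + ip g h.
Proof.
move=> Pf Pg Ph; rewrite /ip; under eq_Rintegral do rewrite mulrDl.
by rewrite RintegralD //; apply: Pint; apply: PM.
Qed.

Lemma ipZl c f h : P f -> P h -> ip (fun x => c * f x) h = c * ip f h.
Proof.
move=> Pf Ph; rewrite /ip; under eq_Rintegral do rewrite -mulrA.
by rewrite RintegralZl //; apply: Pint; apply: PM.
Qed.

Lemma ip0l h : ip (fun _ => 0) h = 0.
Proof.
rewrite /ip; under eq_Rintegral do rewrite mul0r.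
by rewrite Rintegral_cst // mul0r.
Qed.

Lemma ipBl f g h : P f -> P g -> P h ->
  ip (fun x => f x - g x) h = ip f h - ip g h.
Proof.
move=> Pf Pg Ph.
have -> : (fun x => f x - g x) = (fun x => f x + (-1) * g x).
  by apply: funext => x; rewrite mulN1r.
by rewrite ipDl ?ipZl ?mulN1r //; apply: PZ.
Qed.

Lemma ip_suml (I : Type) (r : seq I) (p : pred I) (F : I -> T -> R) h :
  (forall i, P (F i)) -> P h ->
  ip (fun x => \sum_(i <- r | p i) F i x) h = \sum_(i <- r | p i) ip (F i) h.
Proof.
move=> PF Ph; elim: r => [|i r IH].
  rewrite big_nil; under [fun x => _]funext do rewrite big_nil.
  exact: ip0l.
case: (boolP (p i)) => pi.
  rewrite big_cons pi -IH -ipDl //; last exact: P_sum.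
  by congr ip; apply: funext => x; rewrite big_cons pi.
rewrite big_cons (negbTE pi) -IH; congr ip; apply: funext => x.
by rewrite big_cons (negbTE pi).
Qed.

Lemma ip_ge0 f : 0 <= ip f f.
Proof. by apply: Rintegral_ge0 => x _; rewrite -expr2 sqr_ge0. Qed.

Lemma sum_delta p (c : 'I_p -> R) (j : 'I_p) :
  \sum_(j' < p) c j' * (j' == j)%:R = c j.
Proof.
rewrite (bigD1 j) //= eqxx mulr1 big1 ?addr0 // => j' /negbTE ->.
by rewrite mulr0.
Qed.

Lemma GS m (psi : 'I_m -> T -> R) : (forall i, P (psi i)) ->
  exists p (es : 'I_p -> T -> R), [/\ (p <= m)%N, forall j, P (es j),
    forall j j', ip (es j) (es j') = (j == j')%:R &
    forall i t, psi i t = \sum_(j < p) ip (psi i) (es j) * es j t].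
Proof.
elim: m psi => [|m IH] psi Ppsi.
  by exists 0%N, (fun _ _ => 0); split => //; case.
have [p [es [pm Pes ortho rep]]] := IH (fun i => psi (lift ord_max i)) (fun i => Ppsi _).
set phi := psi ord_max.
have Pphi : P phi by apply: Ppsi.
pose c j := ip phi (es j).
pose r t := phi t - \sum_(j < p) c j * es j t.
have PS : P (fun t => \sum_(j < p) c j * es j t).
  by apply: P_sum => j; apply: PZ.
have Pr : P r by apply: PB.
have rperp j : ip r (es j) = 0.
  rewrite /r ipBl // ip_suml //; last by move=> j'; apply: PZ.
  under eq_bigr do rewrite ipZl // ortho.
  by rewrite sum_delta subrr.
have erep i : (forall t, psi (lift ord_max i) t =
    \sum_(j < p) ip (psi (lift ord_max i)) (es j) * es j t) by apply: rep.
case: (eqVneq (ip r r) 0) => [r0|rn0].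
  exists p, es; split => //; first exact: leqW.
  move=> i t; case: (unliftP ord_max i) => [j ->|->]; first exact: rep.
  by have := Pnd Pr r0 t; rewrite /r => /eqP; rewrite subr_eq0 => /eqP.
have rpos : 0 < ip r r by rewrite lt_neqAle eq_sym rn0 ip_ge0.
set rho := Num.sqrt (ip r r).
have rho0 : 0 < rho by rewrite sqrtr_gt0.
have rho2 : rho * rho = ip r r by rewrite -expr2 sqr_sqrtr // ip_ge0.
pose e' t := rho^-1 * r t.
have Pe' : P e' by apply: PZ.
have phir : ip phi r = ip r r.
  rewrite [in RHS]/r ipBl // ip_suml //; last by move=> j'; apply: PZ.
  under eq_bigr do rewrite ipZl // ip_sym rperp mulr0.
  by rewrite big1 // subr0.
have perp' j : ip (es j) e' = 0 by rewrite ip_sym ipZl // rperp mulr0.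
pose es' (j : 'I_p.+1) := match unlift ord_max j with Some j' => es j' | None => e' end.
have es'l j : es' (lift ord_max j) = es j by rewrite /es' liftK.
have es'm : es' ord_max = e' by rewrite /es' unlift_none.
exists p.+1, es'; split => //.
- move=> j; case: (unliftP ord_max j) => [j' ->|->]; by rewrite ?es'l ?es'm.
- move=> j j'; case: (unliftP ord_max j) => [j1 ->|->];
    case: (unliftP ord_max j') => [j2 ->|->]; rewrite ?es'l ?es'm.
  + by rewrite ortho (inj_eq (@lift_inj _ ord_max)).
  + by rewrite perp' eq_sym (negbTE (neq_lift _ _)).
  + by rewrite ip_sym perp' (negbTE (neq_lift _ _)).
  + have rn : rho != 0 by rewrite gt_eqF.
    by rewrite eqxx ipZl // ip_sym ipZl // -rho2 mulrA -invfM mulVf // mulf_neq0.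
- have wl (j : 'I_p) : widen_ord (leqnSn p) j = lift ord_max j.
    by apply: val_inj; rewrite /= /bump leqNgt ltn_ord.
  move=> i t; rewrite big_ord_recr /= es'm.
  under eq_bigr do rewrite wl es'l.
  case: (unliftP ord_max i) => [j ->|->].
    have -> : ip (psi (lift ord_max j)) e' = 0.
      rewrite (funext (erep j)) ip_suml //; last by move=> j'; apply: PZ.
      by rewrite big1 // => j' _; rewrite ipZl // perp' mulr0.
    by rewrite mul0r addr0; apply: rep.
  rewrite -/phi ip_sym ipZl // ip_sym phir -rho2 /e'.
  have rn : rho != 0 by rewrite gt_eqF.
  rewrite mulrA mulKf // mulfV // mul1r /r.
  by rewrite addrC subrK.
Qed.


Hypothesis P1 : P (fun _ => 1).

Lemma abstract_bound (hmu : mu setT = 1%E) m (psi : 'I_m -> T -> R)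
  (Ppsi : forall i, P (psi i)) (N a : R) (N0 : 0 <= N) :
  (forall y, exists c : 'I_m -> R,
     ip (fun t => \sum_(i < m) c i * psi i t) (fun t => \sum_(i < m) c i * psi i t) <= N
     /\ a <= (\sum_(i < m) c i * psi i y) ^+ 2) ->
  a <= N * m%:R.
Proof.
move=> hyp.
have [p [es [pm Pes ortho rep]]] := @GS m psi Ppsi.
pose K t := \sum_(j < p) es j t ^+ 2.
have PK : P K by apply: P_sum => j; under [fun t => _]funext do rewrite expr2; apply: PM.
have Kge0 t : 0 <= K t by apply: sumr_ge0 => j _; apply: sqr_ge0.
have aK y : a <= N * K y.
  have [c [hN ay]] := hyp y.
  set h := (fun t => \sum_(i < m) c i * psi i t) in hN ay.
  have Ph : P h by apply: P_sum => i; apply: PZ.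
  pose b j := ip h (es j).
  have hrep t : h t = \sum_(j < p) b j * es j t.
    rewrite /h; under eq_bigr do rewrite rep big_distrr /=.
    rewrite exchange_big /=; apply: eq_bigr => j _.
    rewrite /b /h ip_suml //; last by move=> i; apply: PZ.
    rewrite big_distrl /=; apply: eq_bigr => i _.
    by rewrite ipZl // mulrA.
  have hh : ip h h = \sum_(j < p) b j ^+ 2.
    rewrite {1}(funext hrep) ip_suml //; last by move=> j; apply: PZ.
    by apply: eq_bigr => j _; rewrite ipZl // ip_sym expr2.
  apply: (le_trans ay); have -> : \sum_(i < m) c i * psi i y = h y by [].
  rewrite hrep; apply: le_trans; first exact: CS_sum.
  by rewrite -hh; apply: ler_wpM2r; [exact: Kge0 | exact: hN].
have PaK : P (fun t => N * K t) by apply: PZ.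
have Pa : P (fun _ => a) by have := PZ a P1; under [fun _ => _]funext do rewrite mulr1.
have intK : \int[mu]_t K t = p%:R.
  have -> : \int[mu]_t K t = ip K (fun _ => 1).
    by rewrite /ip; under [in RHS]eq_Rintegral do rewrite mulr1.
  rewrite ip_suml //; last by move=> j; under [fun t => _]funext do rewrite expr2; apply: PM.
  transitivity (\sum_(j < p) (1 : R)); last by rewrite sumr_const card_ord.
  apply: eq_bigr => j _.
  transitivity (ip (es j) (es j)); last by rewrite ortho eqxx.
  rewrite /ip.
  by apply: eq_Rintegral => t _; rewrite mulr1 expr2.
have : \int[mu]_t a <= \int[mu]_t (N * K t).
  apply: le_Rintegral => //; first exact: Pint Pa.
  exact: Pint PaK.
rewrite Rintegral_cst // hmu /= mulr1 RintegralZl //; last exact: Pint PK.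
rewrite intK => /le_trans; apply.
by apply: ler_wpM2l => //; rewrite ler_nat.
Qed.

End GramSchmidt.
Section ContHelpers.
Variable R : realType.
Variable X : topologicalType.

Lemma cadd (f g : X -> R) : continuous f -> continuous g ->
  continuous (fun x => f x + g x).
Proof. by move=> cf cg x; exact: (continuousD (cf x) (cg x)). Qed.

Lemma cmul (f g : X -> R) : continuous f -> continuous g ->
  continuous (fun x => f x * g x).
Proof. by move=> cf cg x; exact: (continuousM (cf x) (cg x)). Qed.

Lemma ccst (c : R) : continuous (fun _ : X => c).
Proof. exact: cst_continuous. Qed.

Lemma csum (I : Type) (r : seq I) (F : I -> X -> R) :
  (forall i, continuous (F i)) -> continuous (fun x => \sum_(i <- r) F i x).
Proof.
move=> cF; elim: r => [|i r IH].
  by under [fun x => _]funext do rewrite big_nil; exact: ccst.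
by under [fun x => _]funext do rewrite big_cons; exact: cadd.
Qed.

Lemma cprod (I : Type) (r : seq I) (F : I -> X -> R) :
  (forall i, continuous (F i)) -> continuous (fun x => \prod_(i <- r) F i x).
Proof.
move=> cF; elim: r => [|i r IH].
  by under [fun x => _]funext do rewrite big_nil; exact: ccst.
by under [fun x => _]funext do rewrite big_cons; exact: cmul.
Qed.

Lemma cexp (f : X -> R) m : continuous f -> continuous (fun x => f x ^+ m).
Proof.
move=> cf; elim: m => [|m IH].
  by under [fun x => _]funext do rewrite expr0; exact: ccst.
by under [fun x => _]funext do rewrite exprS; exact: cmul.
Qed.

End ContHelpers.
Section GroupPart.
Variable R : realType.
Variable G : TopGroup.type.
Local Notation T := (g_sigma_algebraType (@open G)).
Hypothesis G_compact : compact [set: G].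
Hypothesis mul_cont : continuous (fun p : G * G => (p.1 * p.2)%g).
Variable mu : probability T R.
Hypothesis mu_linv : forall (g : G) (A : set T),
      measurable A -> mu [set (g * x)%g | x in A] = mu A.

Lemma open_meas (U : set G) : open U -> measurable (U : set T).
Proof. by move=> oU; apply: sub_sigma_algebra. Qed.

Lemma cont_meas (h : G -> R) : continuous h -> measurable_fun (setT : set T) h.
Proof.
move=> /continuousP ch.
apply: (measurability _ (measurable_realfun.RGenOpens.measurableE R)).
move=> _ [_ [a [b ->] <-]]; rewrite setTI; apply: open_meas.
exact/ch/interval_open.
Qed.

Lemma lmul_cont (z : G) : continuous (fun y : G => (z * y)%g).
Proof.
move=> y.
apply: (@continuous_comp _ _ _ (fun y : G => (z, y)) (fun p : G * G => (p.1 * p.2)%g)); last exact: mul_cont.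
by apply: cvg_pair; [exact: cvg_cst | exact: cvg_id].
Qed.

Lemma cont_bounded (h : G -> R) : continuous h ->
  exists M : R, forall x, `|h x| <= M.
Proof.
move=> ch.
have : compact [set h x | x in [set: G]].
  by apply: continuous_compact => //; exact: continuous_subspaceT.
move=> /compact_bounded [M [_ HM]].
have MM : M < M + 1 by rewrite ltrDl.
exists (M + 1) => x; have /= := HM (M + 1) MM (h x).
by apply; exists x.
Qed.

Lemma cont_int (h : G -> R) : continuous h ->
  mu.-integrable (setT : set T) (EFin \o h).
Proof.
move=> ch; apply: measurable_bounded_integrable => //.
  by apply: (le_lt_trans (probability_le1 mu measurableT)); rewrite ltry.
  exact: cont_meas.
have [M HM] := @cont_bounded h ch.
exists M; split; first by rewrite num_real.
by move=> y My x _ /=; rewrite (le_trans (HM x)) // ltW.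
Qed.


Lemma negl_seq (s : seq G) (F : G -> set T) :
  (forall i, mu.-negligible (F i)) ->
  mu.-negligible (\bigcup_(i in [set i | i \in s]) F i).
Proof.
move=> NF; elim: s => [|i s IH].
  have -> : \bigcup_(i in [set i | i \in [::]]) F i = set0.
    by apply/seteqP; split => // x [j /=]; rewrite in_nil.
  exact: negligible_set0.
have -> : \bigcup_(j in [set j | j \in i :: s]) F j =
    F i `|` \bigcup_(j in [set j | j \in s]) F j.
  apply/seteqP; split => x.
    move=> [j /=]; rewrite in_cons => /orP[/eqP -> Fx|js Fx]; first by left.
    by right; exists j.
  case => [Fx|[j /= js Fx]]; first by exists i => //=; rewrite in_cons eqxx.
  by exists j => //=; rewrite in_cons js orbT.
exact: negligibleU.
Qed.

Lemma open_pos (U : set G) : open U -> U !=set0 -> (0 < mu U)%E.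
Proof.
move=> oU [u0 Uu0].
rewrite lt_neqAle measure_ge0 andbT eq_sym; apply/negP => /eqP U0.
have open_tr x : open [set (x * y)%g | y in U].
  have -> : [set (x * y)%g | y in U] = (fun y => (x^-1 * y)%g) @^-1` U.
    apply/seteqP; split => [_ [y Uy <-]|y /= Uy]; first by rewrite /= mulKg.
    by exists (x^-1 * y)%g => //; rewrite mulVKg.
  by move/continuousP : (lmul_cont (x^-1)%g); apply.
have : cover_compact [set: G] by rewrite -compact_cover.
rewrite cover_compactE => /(_ G setT (fun x => [set (x * y)%g | y in U])) Hc.
have [D' _ HD'] : finite_subset_cover setT (fun x => [set (x * y)%g | y in U]) setT.
  apply: Hc.
    exists (fun x => [set (x * y)%g | y in U]) => x _; first exact: open_tr.
    by rewrite setTI.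
  move=> g _; exists (g * u0^-1)%g => //; exists u0 => //; by rewrite mulgVK.
have := @negl_seq (finmap.enum_fset D') (fun x => [set (x * y)%g | y in U]).
case.
  move=> x; exists [set (x * y)%g | y in U]; split => //.
    exact: open_meas.
  by rewrite mu_linv; [exact: U0 | exact: open_meas].
move=> N [mN N0 sN].
have : (mu setT <= mu N)%E.
  apply: le_measure; rewrite ?inE //.
  by move=> x _; apply: sN; have [j /= jD fj] := HD' x I; exists j.
rewrite N0; have P1 : mu [set: T] = 1%E by exact: probability_setT.
rewrite P1 => H; have H1 : (0%R < 1 :> \bar R)%E by rewrite lte_fin.
by have := lt_le_trans H1 H; rewrite ltxx.
Qed.

Lemma cont_nd (h : G -> R) : continuous h ->
  \int[mu]_x (h x * h x) = 0 -> forall x, h x = 0.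
Proof.
move=> ch H0 x0; apply/eqP/negPn/negP => hx0.
have hp : 0 < h x0 * h x0 by rewrite lt_def (mulf_neq0 hx0 hx0) /= -expr2 sqr_ge0.
set c := h x0 * h x0 / 2.
have c0 : 0 < c by rewrite divr_gt0.
have chh : continuous (fun y => h y * h y) by move=> y; exact: (continuousM (ch y) (ch y)).
set U := (fun y => h y * h y) @^-1` `]c, +oo[%classic.
have oU : open U by move/continuousP : chh; apply; apply: interval_open.
have x0U : U x0 by rewrite /U /= in_itv /= andbT /c ltr_pdivrMr // ltr_pMr // ltr1n.
have muU := @open_pos U oU (ex_intro _ x0 x0U).
have mU : measurable (U : set T) by apply: open_meas.
have ihh := @cont_int _ chh.
have mhh := measurable_int mu ihh.
have I0 : (\int[mu]_x (h x * h x)%:E = 0)%E.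
  rewrite -[LHS]fineK; first by move: H0; rewrite /Rintegral => ->.
  exact: integrable_fin_num ihh.
have : (c%:E * mu U <= \int[mu]_x (h x * h x)%:E)%E.
  rewrite -integral_cst //.
  apply: (@le_trans _ _ (\int[mu]_(x in (U : set T)) (h x * h x)%:E)%E).
    apply: ge0_le_integral => //.
    - by move=> x _; rewrite lee_fin ltW.
    - exact: measurable_funS mhh.
    - move=> x; rewrite /U /= in_itv /= andbT lee_fin => /ltW //.
  apply: ge0_subset_integral => //.
  by move=> x _; rewrite lee_fin -expr2 sqr_ge0.
have c0E : (0 < c%:E)%E by rewrite lte_fin.
rewrite I0 => /(lt_le_trans (mule_gt0 c0E muU)).
by rewrite ltxx.
Qed.

Lemma lmul_meas (z : G) : measurable_fun (setT : set T) (fun t : T => (z * t)%g : T).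
Proof.
eapply (@measurability _ _ T T setT _ (@open G)); first by [].
move=> _ [A oA <-]; rewrite setTI; apply: open_meas.
by move/continuousP : (lmul_cont z); apply.
Qed.

Lemma lint (F : G -> R) (z : G) : continuous F ->
  \int[mu]_t F (z * t)%g = \int[mu]_t F t.
Proof.
move=> cF.
have cFz : continuous (fun t => F (z * t)%g).
  by move=> t; apply: continuous_comp; [exact: lmul_cont | exact: cF].
have mF := measurable_int mu (@cont_int _ cF).
have iF : mu.-integrable ((fun t : T => (z * t)%g : T) @^-1` setT)
    ((EFin \o F) \o (fun t : T => (z * t)%g : T)).
  rewrite preimage_setT; exact: (@cont_int _ cFz).
rewrite /Rintegral; congr fine.
transitivity (\int[pushforward mu (fun t : T => (z * t)%g : T)]_x (EFin \o F) x)%E.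
  by rewrite (integral_pushforward (lmul_meas z) mF iF measurableT) preimage_setT.
apply: eq_measure_integral; first exact: lmul_meas.
move=> _ A mA _ /=.
rewrite /pushforward.
have -> : (fun t : T => (z * t)%g : T) @^-1` A = [set (z^-1 * x)%g | x in A].
  apply/seteqP; split => [y /= Ay|_ [x Ax <-]] /=; last by rewrite mulVKg.
  by exists (z * y)%g => //; rewrite mulKg.
by rewrite mu_linv.
Qed.

End GroupPart.
Section Poly.
Variable R : realType.

Lemma lin_expand n (L : 'cV[R]_n -> R)
  (hL : forall a u w, L (a *: u + w) = a * L u + L w) x :
  L x = \sum_(i < n) x i 0 * L (delta_mx i 0).
Proof.
have L0 : L 0 = 0.
  have := hL 1 0 0; rewrite scale1r addr0 mul1r => H; lra.
have Ls (r : seq 'I_n) (c : 'I_n -> R) (v : 'I_n -> 'cV[R]_n) :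
    L (\sum_(i <- r) c i *: v i) = \sum_(i <- r) c i * L (v i).
  elim: r => [|i r IH]; first by rewrite !big_nil.
  by rewrite !big_cons hL IH.
rewrite {1}(matrix_sum_delta x).
under eq_bigr do rewrite big_ord1.
exact: Ls.
Qed.

Variables n k : nat.
Definition Smon := [set t : k.-tuple 'I_n | sorted leq [seq val i | i <- t]]%SET.
Definition mono (t : k.-tuple 'I_n) (x : 'cV[R]_n) := \prod_(a <- t) x a 0.

Definition ordle := fun a b : 'I_n => (a <= b)%N.

Lemma srt_size (f : {ffun 'I_k -> 'I_n}) :
  size (sort ordle [seq f j | j <- enum 'I_k]) == k.
Proof. by rewrite size_sort size_map size_enum_ord. Qed.

Definition srt (f : {ffun 'I_k -> 'I_n}) : k.-tuple 'I_n := Tuple (srt_size f).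

Lemma srtS f : srt f \in Smon.
Proof.
rewrite /Smon inE /= sorted_map; apply: sort_sorted => a b; exact: leq_total.
Qed.

Lemma mono_srt f x : mono (srt f) x = \prod_(j < k) x (f j) 0.
Proof.
rewrite /mono /= (perm_big _ (permEl (perm_sort _ _))) big_map.
by rewrite big_enum.
Qed.

Definition idx f : 'I_#|Smon| := enum_rank_in (srtS f) (srt f).

Lemma pow_rep (a : 'I_n -> R) : exists c : 'I_#|Smon| -> R, forall x : 'cV[R]_n,
  (\sum_(i < n) x i 0 * a i) ^+ k = \sum_(i < #|Smon|) c i * mono (enum_val i) x.
Proof.
pose coef (f : {ffun 'I_k -> 'I_n}) := \prod_(j < k) a (f j).
exists (fun i => \sum_(f | idx f == i) coef f) => x.
have -> : (\sum_(i < n) x i 0 * a i) ^+ k = \prod_(j < k) \sum_(i < n) x i 0 * a i.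
  by rewrite prodr_const card_ord.
rewrite bigA_distr_bigA /=.
under eq_bigr => f _ do rewrite big_split /= -mono_srt -(enum_rankK_in (srtS f) (srtS f)) -/(idx f).
rewrite (partition_big idx predT) //=.
apply: eq_bigr => i _; rewrite big_distrl /=.
apply: eq_bigr => f /eqP <-.
by rewrite mulrC.
Qed.

End Poly.

Lemma card_Smon n k : (0 < k)%N -> #|Smon n k| = 'C(n + k - 1, k).
Proof.
move=> k0; case: n => [|n'].
  rewrite bin_small; last by rewrite add0n subn1 prednK.
  apply/eqP; rewrite -leqn0 (leq_trans (max_card _)) //.
  by rewrite card_tuple card_ord exp0n.
by rewrite /Smon card_sorted_tuples addSn subn1 /= addnC.
Qed.

Theorem corollary1p5
  (R : realType) (G : TopGroup.type)
  (* G is a compact (Hausdorff) topological group *)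
  (G_hausdorff : hausdorff_space G)
  (G_compact : compact [set: G])
  (mul_cont : continuous (fun p : G * G => (p.1 * p.2)%g))
  (inv_cont : continuous (fun x : G => (x^-1)%g))
  (* dg : the Haar probability measure on the Borel sets of G *)
  (mu : probability (g_sigma_algebraType (@open G)) R)
  (mu_linv : forall (g : G) (A : set (g_sigma_algebraType (@open G))),
      measurable A -> mu [set (g * x)%g | x in A] = mu A)
  (mu_outer_reg : forall A : set (g_sigma_algebraType (@open G)),
      measurable A ->
      mu A = ereal_inf [set mu U | U in [set U | open (U : set G) /\ A `<=` U]])
  (mu_inner_reg : forall U : set (g_sigma_algebraType (@open G)),
      open (U : set G) ->
      mu U = ereal_sup [set mu K | K in [set K | compact (K : set G) /\ K `<=` U]])
  (* G acts linearly and continuously on V = R^n, with n = dim V *)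
  (n : nat) (act : G -> 'cV[R]_n -> 'cV[R]_n)
  (act_linear : forall (g : G) (a : R) (u w : 'cV[R]_n),
      act g (a *: u + w) = a *: act g u + act g w)
  (act_one : forall u : 'cV[R]_n, act 1%g u = u)
  (act_mul : forall (g h : G) (u : 'cV[R]_n), act (g * h)%g u = act g (act h u))
  (act_cont : continuous (fun p : G * 'cV[R]_n => act p.1 p.2))
  (v : 'cV[R]_n) (l : 'cV[R]_n -> R)
  (l_linear : forall (a : R) (u w : 'cV[R]_n), l (a *: u + w) = a * l u + l w)
  (k : nat) (k_pos : (0 < k)%N) :
  let f := fun g : G => l (act g v) in
  let norm2k := Lnorm mu (((2 * k)%:R : R)%:E) (fun g => (f g)%:E) in
  let norminf := sup (range (fun g : G => `|f g|)) in
  (norm2k <= norminf%:E)%E /\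
  (norminf%:E <= ((('C(n + k - 1, k))%:R : R) `^ ((2 * k)%:R)^-1)%:E * norm2k)%E.
Proof.
move=> f norm2k norminf.
pose P := fun h : g_sigma_algebraType (@open G) -> R => continuous (h : G -> R).
have cact : continuous (fun g : G => act g v).
  move=> g; apply: (@continuous_comp _ _ _ (fun g : G => (g, v))
    (fun p : G * 'cV[R]_n => act p.1 p.2)); last exact: act_cont.
  exact: (@cvg_pair _ _ _ (nbhs g) (nbhs g) (nbhs v) _ _ _ (fun g => g) (fun _ => v) cvg_id (cvg_cst v)).
have ccoord i : continuous (fun g : G => act g v i 0).
  move=> g; apply: (@continuous_comp _ _ _ (fun g => act g v)
    (fun M : 'cV[R]_n => M i 0)); [exact: cact | exact: coord_continuous].
have cf : continuous f.
  have -> : f = fun g => \sum_(i < n) act g v i 0 * l (delta_mx i 0).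
    by apply: funext => g; rewrite /f (@lin_expand R n l l_linear).
  by apply: csum => i; apply: cmul => //; exact: ccst.
pose F := fun t : G => f t ^+ k * f t ^+ k.
have cF : continuous F by apply: cmul; apply: cexp.
pose N := \int[mu]_t F t.
have N0 : 0 <= N by apply: Rintegral_ge0 => t _; rewrite /F -expr2 sqr_ge0.
have key g : (f g ^+ k) ^+ 2 <= N * ('C(n + k - 1, k))%:R.
  rewrite -(card_Smon n k k_pos).
  pose psi (i : 'I_#|Smon n k|) (t : g_sigma_algebraType (@open G)) :=
    mono R n k (enum_val i) (act t v).
  have Ppsi i : P (psi i) by rewrite /P /psi /mono; apply: cprod => a; exact: ccoord.
  apply: (@abstract_bound _ _ R mu P _ _ _ _ _ _ _ _ _ psi Ppsi N _ N0).
  - exact: ccst.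
  - by move=> f1 f2; apply: cadd.
  - by move=> c f1 cf1; apply: cmul => //; exact: ccst.
  - by move=> f1 f2; apply: cmul.
  - by move=> h ch; exact: (@cont_int R G G_compact mu h ch).
  - by move=> h ch h0; exact: (@cont_nd R G G_compact mul_cont mu mu_linv h ch h0).
  - exact: ccst.
  - exact: probability_setT.
  - move=> y; pose z := (g * y^-1)%g.
    pose L x := l (act z x).
    have hL a u w : L (a *: u + w) = a * L u + L w by rewrite /L act_linear l_linear.
    have [c hc] := @pow_rep R n k (fun i => L (delta_mx i 0)).
    exists c.
    have hE t : \sum_(i < #|Smon n k|) c i * psi i t = f (z * t)%g ^+ k.
      by rewrite /psi -hc -(@lin_expand R n L hL) /L /f act_mul.
    split.
    + rewrite le_eqVlt; apply/orP; left; apply/eqP.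
      rewrite /ip; transitivity (\int[mu]_t F (z * t)%g).
        by apply: eq_Rintegral => t _; rewrite !hE.
      by rewrite (@lint R G G_compact mul_cont mu mu_linv F z cF).
    + by rewrite hE /z mulgVK.
have [M0 HM0] := @cont_bounded R G G_compact f cf.
have hs : has_sup (range (fun g => `|f g|)).
  split; first by exists `|f 1%g|, 1%g.
  by exists M0 => _ [x _ <-]; exact: HM0.
have ub x : `|f x| <= norminf.
  by rewrite /norminf; apply: (sup_upper_bound hs); exists x.
have ninf0 : 0 <= norminf by apply: le_trans (ub 1%g).
have k2 : (2 * k)%:R != 0 :> R by rewrite pnatr_eq0 muln_eq0 /= -lt0n k_pos.
have root (M : R) : 0 <= M -> (M ^+ (2 * k)) `^ ((2 * k)%:R)^-1 = M.
  by move=> M0'; rewrite -powR_mulrn // -powRrM mulfV // powRr1.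
have fk x : `|f x| ^+ (2 * k) = f x ^+ k * f x ^+ k.
  have -> : (2 * k = k + k)%N by rewrite mul2n addnn.
  by rewrite -normrX exprD ger0_norm // -expr2 sqr_ge0.
have n2k : norm2k = (N `^ ((2 * k)%:R)^-1)%:E.
  rewrite /norm2k unlock /=.
  have -> : (\int[mu]_x (`|(f x)%:E| `^ (2 * k)%:R))%E = N%:E.
    rewrite /N /Rintegral fineK; last first.
      exact: integrable_fin_num (@cont_int R G G_compact mu F cF).
    by apply: eq_integral => x _; rewrite abse_EFin poweR_EFin powR_mulrn // fk.
  by rewrite poweR_EFin.
have pinv : 0 <= ((2 * k)%:R : R)^-1 by rewrite invr_ge0.
split.
- rewrite n2k lee_fin -[X in _ <= X](root _ ninf0).
  apply: ge0_ler_powR => //; rewrite ?inE ?nnegrE ?exprn_ge0 //.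
  have : \int[mu]_t F t <= \int[mu]_t (norminf ^+ (2 * k)).
    apply: le_Rintegral => //.
    - exact: (@cont_int R G G_compact mu F cF).
    - exact: (@cont_int R G G_compact mu (fun=> norminf ^+ (2 * k)) (ccst _ _ _)).
    - move=> t _; rewrite /F -fk; apply: lerXn2r => //; rewrite ?inE ?nnegrE //.
  rewrite Rintegral_cst //.
  set s := fine _; have -> : s = 1 by exact: (congr1 fine (probability_setT mu)).
  by rewrite mulr1.
- rewrite n2k -EFinM lee_fin -powRM ?ler0n //.
  apply: ge_sup; first by exists `|f 1%g|, 1%g.
  move=> _ [x _ <-]; rewrite -[X in X <= _](root _ (normr_ge0 (f x))).
  apply: ge0_ler_powR => //; rewrite ?inE ?nnegrE ?exprn_ge0 ?mulr_ge0 ?ler0n //.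
  by rewrite fk -expr2 mulrC key.
Qed.
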